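(* Let $G$ be a relation on a finite set $K$ with $Dom(G)=K$. (a) For $\mathbf{s}\in K_G$ there exist a $G$ basic set $B$ and $k\in\mathbb{Z}_+$ such that $s_i\in B$ and $S^i(\mathbf{s})\in B_G$ for all $i\ge k$; this $B$ is denoted $End(\mathbf{s})$, and $\omega S(\mathbf{s})\subset B_G$. (b) If $B$ is a $G$ basic set then $B_G$ is an $S$ basic set of $(K_G,S)$ and $S|_{B_G}$ is topologically transitive; moreover $B\mapsto B_G$ is a bijection from the $G$ basic sets onto the $S$ basic sets in $K_G$. (c) For $A\subset K$: $\mathcal{O}G(A)\subset A$ iff for all $\mathbf{s}\in K_G$, ($\mathbf{s}\in A_G\Leftrightarrow s_0\in A$). These conditions imply that $\mathcal{C}S(A_G)\subset A_G$, that $A_G$ is clopen in $K_G$, and that $\{\mathbf{s}:End(\mathbf{s})\subset A\}$ is open in $K_G$. (d) For every $s\in K$ there is $\mathbf{s}\in K_G$ with $s_0=s$ and $End(\mathbf{s})$ a terminal $G$ basic set. (e) For a $G$ basic set $B$ the following are equivalent: (i) $B$ is a terminal $G$ basic set; (ii) $B_G$ is a terminal $S$ basic set; (iii) $B_G$ is a visible $S$ basic set; (iv) $B_G$ is clopen in $K_G$; (v) $B_G$ is an attractor for $S$; (vi) $\{\mathbf{s}:End(\mathbf{s})=B\}$ is open in $K_G$. (f) $\{\mathbf{s}\in K_G:End(\mathbf{s})$ is a terminal $G$ basic set$\}$ is a dense open subset of $K_G$.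
   Context: $K$ is a finite set, $G\subset K\times K$ a relation, $Dom(G)=\{s:\exists t,(s,t)\in G\}$. $K^{\mathbb{Z}_+}$ carries the metric $d(\mathbf{s},\mathbf{t})=\inf\{1/(k+1): s_i=t_i\ \forall i<k\}$ and the shift $S(\mathbf{s})_i=s_{i+1}$. $K_G=\{\mathbf{s}\in K^{\mathbb{Z}_+}:(s_i,s_{i+1})\in G\ \forall i\}$, with $S$ restricted to it; for $A\subset K$, $A_G=K_G\cap A^{\mathbb{Z}_+}$. $\mathcal{O}G=\bigcup_{n\ge1}G^n$ (relational powers). $G$ basic sets are the equivalence classes of $\{s:(s,s)\in\mathcal{O}G\}$ under ''$(s,t)\in\mathcal{O}G$ and $(t,s)\in\mathcal{O}G$''; a $G$ basic set $B$ is terminal if $\mathcal{O}G(B)\subset B$. For the map $S$ on the compact metric space $K_G$: $\mathcal{C}S$ is the chain relation ($(x,y)\in\mathcal{C}S$ iff for all $\epsilon>0$ there is an $\epsilon$-chain $x=x_0,\dots,x_n=y$, $n\ge1$, $d(S(x_i),x_{i+1})\le\epsilon$), $S$ basic sets are equivalence classes of chain recurrent points under mutual chain reachability, terminal means $\mathcal{C}S(B)\subset B$, $\omega S(\mathbf{s})$ is the limit set of the forward orbit, the basin of $B$ is $\operatorname{int}\{\mathbf{s}:\omega S(\mathbf{s})\subset B\}$, visible means nonempty basin, and an attractor is $\bigcap_{n\ge0}S^n(U)$ for a closed $U$ with $S(U)\subset\operatorname{int}U$. *)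

(* Defs.v *)
From mathcomp Require Import all_boot.
Set Implicit Arguments. Unset Strict Implicit. Unset Printing Implicit Defensive.

Definition shift (K : Type) (x : nat -> K) : nat -> K := fun i => x i.+1.
Definition shiftn (K : Type) (n : nat) (x : nat -> K) : nat -> K := fun i => x (n + i).

(* close k x y  <->  x_i = y_i for all i < k  <->  d(x,y) <= 1/(k+1)
   for the metric d(x,y) = inf{1/(k+1) : x_i = y_i for all i < k}. *)
Definition close (K : Type) (k : nat) (x y : nat -> K) : Prop :=
  forall i, (i < k)%N -> x i = y i.

Definition inKG (K : Type) (G : K -> K -> Prop) (x : nat -> K) : Prop :=
  forall i, G (x i) (x i.+1).

Definition restrG (K : Type) (G : K -> K -> Prop) (A : K -> Prop) (x : nat -> K) : Prop :=
  inKG G x /\ forall i, A (x i).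

Fixpoint relpow (K : Type) (G : K -> K -> Prop) (n : nat) : K -> K -> Prop :=
  match n with
  | 0 => fun s t => s = t
  | n'.+1 => fun s t => exists u, relpow G n' s u /\ G u t
  end.

Definition OG (K : Type) (G : K -> K -> Prop) (s t : K) : Prop :=
  exists n, relpow G n.+1 s t.

Definition Gbasic (K : Type) (G : K -> K -> Prop) (B : K -> Prop) : Prop :=
  exists s, OG G s s /\
    forall t, B t <-> (OG G t t /\ OG G s t /\ OG G t s).

Definition Gterminal (K : Type) (G : K -> K -> Prop) (B : K -> Prop) : Prop :=
  Gbasic G B /\ forall s t, B s -> OG G s t -> B t.

(* an eps-chain with eps = 1/(k+1): points c 0 = x, ..., c n = y in K_G,
   n >= 1, with d(S(c i), c (i+1)) <= 1/(k+1) *)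
Definition chain (K : Type) (G : K -> K -> Prop) (k : nat) (x y : nat -> K) : Prop :=
  exists n (c : nat -> nat -> K),
    (0 < n)%N /\ c 0 = x /\ c n = y /\
    (forall i, (i <= n)%N -> inKG G (c i)) /\
    (forall i, (i < n)%N -> close k (shift (c i)) (c i.+1)).

(* CS: for every eps > 0 there is an eps-chain (eps = 1/(k+1) is cofinal) *)
Definition CS (K : Type) (G : K -> K -> Prop) (x y : nat -> K) : Prop :=
  forall k, chain G k x y.

Definition Sbasic (K : Type) (G : K -> K -> Prop) (C : (nat -> K) -> Prop) : Prop :=
  exists x, inKG G x /\ CS G x x /\
    forall y, C y <-> (inKG G y /\ CS G y y /\ CS G x y /\ CS G y x).

Definition Sterminal (K : Type) (G : K -> K -> Prop) (C : (nat -> K) -> Prop) : Prop :=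
  Sbasic G C /\ forall x y, C x -> CS G x y -> C y.

Definition omega (K : Type) (x y : nat -> K) : Prop :=
  forall k N, exists n, (N <= n)%N /\ close k (shiftn n x) y.

Definition openKG (K : Type) (G : K -> K -> Prop) (U : (nat -> K) -> Prop) : Prop :=
  forall x, inKG G x -> U x ->
    exists k, forall y, inKG G y -> close k x y -> U y.

Definition closedKG (K : Type) (G : K -> K -> Prop) (U : (nat -> K) -> Prop) : Prop :=
  openKG G (fun x => ~ U x).

Definition clopenKG (K : Type) (G : K -> K -> Prop) (U : (nat -> K) -> Prop) : Prop :=
  openKG G U /\ closedKG G U.

Definition interiorKG (K : Type) (G : K -> K -> Prop) (U : (nat -> K) -> Prop)
  (x : nat -> K) : Prop :=
  inKG G x /\ exists k, forall y, inKG G y -> close k x y -> U y.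

Definition isOpenIn (K : Type) (Y U : (nat -> K) -> Prop) : Prop :=
  (forall x, U x -> Y x) /\
  forall x, U x -> exists k, forall y, Y y -> close k x y -> U y.

Definition topTransitive (K : Type) (Y : (nat -> K) -> Prop) : Prop :=
  forall U V, isOpenIn Y U -> isOpenIn Y V ->
    (exists x, U x) -> (exists x, V x) ->
    exists n x, (0 < n)%N /\ U x /\ V (shiftn n x).

Definition basin (K : Type) (G : K -> K -> Prop) (C : (nat -> K) -> Prop) (x : nat -> K) : Prop :=
  interiorKG G (fun y => inKG G y /\ forall z, omega y z -> C z) x.

Definition visible (K : Type) (G : K -> K -> Prop) (C : (nat -> K) -> Prop) : Prop :=
  Sbasic G C /\ exists x, basin G C x.

Definition attractor (K : Type) (G : K -> K -> Prop) (C : (nat -> K) -> Prop) : Prop :=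
  exists U : (nat -> K) -> Prop,
    (forall x, U x -> inKG G x) /\ closedKG G U /\
    (forall x, U x -> interiorKG G U (shift x)) /\
    forall y, C y <-> (forall n, exists x, U x /\ shiftn n x = y).

Definition IsEnd (K : Type) (G : K -> K -> Prop) (x : nat -> K) (B : K -> Prop) : Prop :=
  Gbasic G B /\ exists k, forall i, (k <= i)%N -> B (x i) /\ restrG G B (shiftn i x).

(* Main.v *)
Require Import Defs.
From mathcomp Require Import all_boot zify.
From Stdlib Require Import Classical ClassicalEpsilon FunctionalExtensionality.

Definition dec (P : Prop) : bool := if excluded_middle_informative P then true else false.
Lemma decP (P : Prop) : reflect P (dec P).
Proof. by rewrite /dec; case: excluded_middle_informative => h; constructor. Qed.
Set Implicit Arguments. Unset Strict Implicit. Unset Printing Implicit Defensive.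

Section S.
Variable K : finType.
Variable G : K -> K -> Prop.

Definition reach0 a b := exists m, relpow G m a b.

Lemma relpow_path n a b : relpow G n a b <->
  exists p : nat -> K, p 0 = a /\ p n = b /\ forall i, i < n -> G (p i) (p i.+1).
Proof.
split.
- elim: n b => [|n IH] b /=.
  + move=> ->; exists (fun _ => b); split => //; split => //.
  + case=> u [/IH [p [p0 [pn hp]]] Gub].
    exists (fun i => if i <= n then p i else b); split; first by rewrite leq0n.
    split; first by rewrite ltnn.
    move=> i lti; case: (ltngtP i n) => hin.
    * exact: hp.
    * lia.
    * by rewrite hin pn.
- elim: n b => [|n IH] b /=.
  + by case=> p [<- [<- _]].
  + case=> p [p0 [pn hp]]; exists (p n); split; last by rewrite -pn; apply: hp.
    apply/IH; exists p; split => //; split => // i lti; apply: hp; lia.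
Qed.

Lemma relpow_add m n a b c : relpow G m a b -> relpow G n b c -> relpow G (m + n) a c.
Proof.
move=> h1; elim: n c => [|n IH] c /=; first by move=> <-; rewrite addn0.
by case=> u [/IH h Guc]; rewrite addnS /=; exists u.
Qed.

Lemma seg (p : nat -> K) a b : (forall i, a <= i -> i < b -> G (p i) (p i.+1)) ->
  a <= b -> relpow G (b - a) (p a) (p b).
Proof.
move=> hp; elim: b hp => [|b IH] hp hab.
  by have -> : a = 0 by lia.
case: (ltngtP a b.+1) => h; last first.
- by rewrite h subnn.
- lia.
- rewrite subSn; last lia.
  exists (p b); split; last by apply: hp; lia.
  apply: IH; last lia.
  move=> i h1 h2; apply: hp; lia.
Qed.

Lemma OG_reach0 a b : OG G a b -> reach0 a b.
Proof. by case=> n h; exists n.+1. Qed.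

Lemma reach0_refl a : reach0 a a.
Proof. by exists 0. Qed.

Lemma OG_trans0 a b c : OG G a b -> reach0 b c -> OG G a c.
Proof. case=> n h [m h']; exists (n + m); have := relpow_add h h'; by rewrite addSn. Qed.

Lemma OG_trans0' a b c : reach0 a b -> OG G b c -> OG G a c.
Proof. case=> n h [m h']; exists (n + m); have := relpow_add h h'; by rewrite addnS. Qed.

Lemma reach0_trans a b c : reach0 a b -> reach0 b c -> reach0 a c.
Proof. case=> n h [m h']; exists (n + m); exact: relpow_add h h'. Qed.

Lemma OG_trans a b c : OG G a b -> OG G b c -> OG G a c.
Proof. by move=> h /OG_reach0; apply: OG_trans0. Qed.

Lemma reach0_cases a b : reach0 a b -> a = b \/ OG G a b.
Proof. by case=> [[|n]] h; [left | right; exists n]. Qed.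


Lemma app (p y : nat -> K) n : (forall i, i < n -> G (p i) (p i.+1)) -> p n = y 0 ->
  inKG G y -> inKG G (fun i => if i <= n then p i else y (i - n)).
Proof.
move=> hp pn hy i /=; case: (ltngtP i n) => hin.
- exact: hp.
- rewrite subSn; last exact: ltnW. exact: hy.
- by rewrite hin subSnn pn.
Qed.

Lemma catp (x p : nat -> K) L n : (forall i, i < L -> G (x i) (x i.+1)) ->
  (forall i, i < n -> G (p i) (p i.+1)) -> x L = p 0 ->
  forall i, i < L + n -> G (if i <= L then x i else p (i - L))
                          (if i.+1 <= L then x i.+1 else p (i.+1 - L)).
Proof.
move=> hx hp xp i hi; case: (ltngtP i L) => hin.
- exact: hx.
- rewrite subSn; last exact: ltnW. apply: hp; lia.
- by rewrite hin subSnn xp; apply: (hp 0); lia.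
Qed.

Lemma splice (x y : nat -> K) L n : (forall i, i < L -> G (x i) (x i.+1)) -> inKG G y ->
  relpow G n (x L) (y 0) ->
  exists z, inKG G z /\ (forall i, i <= L -> z i = x i) /\ (forall i, z (L + n + i) = y i) /\
  (forall i, L <= i -> i <= L + n -> reach0 (x L) (z i) /\ reach0 (z i) (y 0)).
Proof.
move=> hx hy /relpow_path [p [p0 [pn hp]]].
pose r := fun i => if i <= L then x i else p (i - L).
have hr : forall i, i < L + n -> G (r i) (r i.+1) by apply: catp => //; rewrite p0.
have rmid : forall i, L <= i -> i <= L + n -> r i = p (i - L).
  move=> i h1 h2; rewrite /r; case: (ltngtP i L) => hin //; first lia.
  by rewrite hin subnn p0.
have rend : r (L + n) = y 0 by rewrite rmid ?leqnn ?leq_addr // -pn; congr p; lia.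
exists (fun i => if i <= L + n then r i else y (i - (L + n))); split.
  exact: app.
split.
  move=> i hi /=; have -> : i <= L + n by lia. by rewrite /r hi.
split.
  move=> i /=; case: i => [|i]; first by rewrite addn0 leqnn.
  have -> : (L + n + i.+1 <= L + n) = false by lia.
  congr y; lia.
move=> i h1 h2 /=; rewrite h2 rmid //; split.
  rewrite -p0; exists (i - L - 0); apply: seg => //; move=> j _ hj; apply: hp; lia.
rewrite -pn; exists (n - (i - L)); apply: seg; last lia. move=> j _ hj; apply: hp; lia.
Qed.

Definition cls (a t : K) := OG G t t /\ OG G a t /\ OG G t a.

Lemma cls_basic a : OG G a a -> Gbasic G (cls a).
Proof. by move=> h; exists a. Qed.

Lemma basic_OG B t u : Gbasic G B -> B t -> B u -> OG G t u.
Proof.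
case=> s [hs hB] /hB [_ [_ ts]] /hB [_ [su _]]; exact: OG_trans ts su.
Qed.

Lemma basic_self B t : Gbasic G B -> B t -> OG G t t.
Proof. by case=> s [hs hB] /hB []. Qed.

Lemma basic_closed0 B t u v : Gbasic G B -> B t -> B u -> reach0 t v -> reach0 v u -> B v.
Proof.
move=> hb bt bu tv vu; have [s [hs hB]] := hb.
have [_ [st ts]] := (hB t).1 bt; have [_ [su us]] := (hB u).1 bu.
apply/hB; split; last split.
- apply: OG_trans0' vu _; exact: OG_trans0 (OG_trans us st) tv.
- exact: OG_trans0 st tv.
- exact: OG_trans0' vu us.
Qed.

Lemma basic_eq B B' t : Gbasic G B -> Gbasic G B' -> B t -> B' t -> forall u, B u <-> B' u.
Proof.
move=> hb hb' bt bt' u; split => hu.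
- apply: (basic_closed0 hb' bt' bt'); apply: OG_reach0.
  + exact: basic_OG hb bt hu.
  + exact: basic_OG hb hu bt.
- apply: (basic_closed0 hb bt bt); apply: OG_reach0.
  + exact: basic_OG hb' bt' hu.
  + exact: basic_OG hb' hu bt'.
Qed.

Lemma escape B b c : Gbasic G B -> B b -> OG G b c -> ~ B c -> forall v, reach0 c v -> ~ B v.
Proof.
move=> hb bb bc nc v cv bv; apply: nc; apply: (basic_closed0 hb bb bv).
- exact: OG_reach0.
- exact: cv.
Qed.

Lemma periodic u : OG G u u -> exists w P, 0 < P /\ inKG G w /\ w 0 = u /\
  (forall i, w (i + P) = w i) /\ (forall i, reach0 u (w i) /\ reach0 (w i) u).
Proof.
case=> n /relpow_path [p [p0 [pn hp]]].
exists (fun i => p (i %% n.+1)), n.+1; split => //; split; last split; last split.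
- move=> i /=; have hq := ltn_pmod i (ltn0Sn n).
  have e : i.+1 = i %/ n.+1 * n.+1 + (i %% n.+1).+1 by rewrite {1}(divn_eq i n.+1) addnS.
  rewrite e modnMDl; case: (ltngtP (i %% n.+1).+1 n.+1) => h.
  + by rewrite (modn_small h); apply: hp.
  + lia.
  + rewrite h modnn p0 -pn; have := hp (i %% n.+1) hq; by rewrite h.
- by rewrite mod0n.
- by move=> i; rewrite modnDr.
- move=> i; have hq := ltn_pmod i (ltn0Sn n); split.
  + exists (i %% n.+1 - 0); rewrite -{1}p0; apply: seg => //; move=> j _ hj; apply: hp; lia.
  + exists (n.+1 - i %% n.+1); rewrite -pn; apply: seg; last lia.
    move=> j _ hj; apply: hp; lia.
Qed.

Lemma inKG_shiftn n x : inKG G x -> inKG G (shiftn n x).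
Proof. by move=> h i; rewrite /shiftn addnS; apply: h. Qed.

Lemma chain_of_z k x z y m : inKG G x -> inKG G z -> close k.+1 x z -> 0 < m ->
  (forall i, z (m + i) = y i) -> chain G k x y.
Proof.
move=> hx hz cxz hm zy.
exists m, (fun i => if i == 0 then x else shiftn i z); split => //; split => //; split.
  have -> : (m == 0) = false by lia. apply: functional_extensionality => i; exact: zy.
split.
  by move=> i _; case: (i == 0); [exact: hx | exact: inKG_shiftn].
move=> i _ j hj; case: i => [|i] /=.
  rewrite /shift /shiftn cxz; [congr z; lia | lia].
by rewrite /shift /shiftn; congr z; lia.
Qed.

Lemma CS_of_reach x y : inKG G x -> inKG G y -> (forall L, OG G (x L) (y 0)) -> CS G x y.
Proof.
move=> hx hy h k; have [n hn] := h k.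
have [z [hz [zx [zy _]]]] := splice (fun i _ => hx i) hy hn.
apply: (chain_of_z hx hz (m := k + n.+1)) => //.
- move=> i hi; rewrite zx //; lia.
- lia.
Qed.

Lemma chain_path k x y : 0 < k -> chain G k x y -> exists (p : nat -> K) n,
  0 < n /\ (forall i, G (p i) (p i.+1)) /\ p 0 = x 0 /\ (forall j, p (n + j) = y j) /\
  (forall j, j <= k -> (j <= n /\ p j = x j) \/ (n < j /\ x j = y (j - n))).
Proof.
move=> hk [n [c [hn [c0 [cn [hc hcl]]]]]].
have claim : forall i, i <= n -> forall m, i + m <= k -> c i m = x (i + m).
  elim=> [|i IH] hi m hm; first by rewrite c0.
  rewrite -(hcl i hi m); last lia.
  rewrite /shift IH; [congr x; lia | lia | lia].
exists (fun i => if i <= n then c i 0 else y (i - n)), n; split => //; split; last split; last split.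
- move=> i; case: (ltngtP i n) => hin.
  + have := hcl i hin 0 hk; rewrite /shift => <-; exact: (hc i (ltnW hin) 0).
  + rewrite subSn; last exact: ltnW. rewrite -cn; exact: (hc n (leqnn n)).
  + rewrite hin subSnn -cn; exact: (hc n (leqnn n) 0).
- by rewrite leq0n c0.
- move=> j; case: j => [|j]; first by rewrite addn0 leqnn cn.
  have -> : (n + j.+1 <= n) = false by lia. congr y; lia.
- move=> j hj; case: (leqP j n) => hjn; [left | right]; split => //.
  + by rewrite claim // addn0.
  + have := claim n (leqnn n) (j - n); rewrite cn => ->; last lia. congr x; lia.
Qed.

Lemma chain_OG k x y : 0 < k -> chain G k x y -> forall j, OG G (x 0) (y j).
Proof.
move=> hk /(chain_path hk) [p [n [hn [hp [p0 [py _]]]]]] j.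
exists (n + j).-1; have -> : (n + j).-1.+1 = n + j - 0 by lia.
rewrite -p0 -py; apply: seg => //.
Qed.

Lemma chain_back k x y : 0 < k -> chain G k y x -> forall j, j <= k ->
  reach0 (y j) (x 0) \/ exists m, m < j /\ y j = x m.
Proof.
move=> hk /(chain_path hk) [p [n [hn [hp [p0 [py hj]]]]]] j jk.
case: (hj j jk) => [[jn pj] | [nj e]].
- left; rewrite -pj -(py 0); exists (n + 0 - j); apply: seg => //; lia.
- right; exists (j - n); split => //; lia.
Qed.

Lemma OG1 a b : G a b -> OG G a b.
Proof. by move=> h; exists 0, a. Qed.

Lemma term_reach (hDom : forall s, exists t, G s t) s :
  exists u, reach0 s u /\ OG G u u /\ forall v, OG G u v -> OG G v u.
Proof.
pose R0 t := [pred v | dec (reach0 t v)].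
suff: forall n t, #|R0 t| <= n -> exists u, reach0 t u /\ OG G u u /\ forall v, OG G u v -> OG G v u.
  by apply; apply: leqnn.
elim=> [|n IH] t ht.
  have : 0 < #|R0 t| by apply/card_gt0P; exists t; rewrite inE; apply/decP; exact: reach0_refl.
  lia.
case: (classic (forall v, OG G t v -> OG G v t)) => h.
  exists t; split; first exact: reach0_refl.
  have [t' tt'] := hDom t; have h1 := OG1 tt'.
  by split; [exact: OG_trans h1 (h _ h1) | exact: h].
have [v hv] := not_all_ex_not _ _ h; have [tv nvt] := imply_to_and _ _ hv.
have hlt : #|R0 v| < #|R0 t|.
  apply: proper_card; apply/properP; split.
    by apply/subsetP => w; rewrite !inE => /decP hw; apply/decP; exact: reach0_trans (OG_reach0 tv) hw.
  exists t; rewrite !inE; first by apply/decP; exact: reach0_refl.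
  apply/decP => /reach0_cases [e | //]; by subst v.
have [u [vu hu]] := IH v (ltnSE (leq_trans hlt ht)).
by exists u; split => //; exact: reach0_trans (OG_reach0 tv) vu.
Qed.

Lemma periodic_shift (y : nat -> K) N P : (forall i, y (N + P + i) = y (N + i)) ->
  forall m i, y (N + m * P + i) = y (N + i).
Proof.
move=> h; elim=> [|m IH] i; first by rewrite mul0n addn0.
by rewrite mulSn addnA -(addnA (N + P)) h addnA IH.
Qed.

Lemma omega_periodic (y : nat -> K) N P : (forall i, y (N + P + i) = y (N + i)) -> 0 < P ->
  omega y (shiftn N y).
Proof.
move=> h hP k M; exists (N + M * P); split; first by nia.
by move=> i _; rewrite /shiftn periodic_shift.
Qed.

Lemma omega_KG y z : inKG G y -> omega y z -> inKG G z.
Proof.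
move=> hy hz i; have [n [_ c]] := hz i.+2 0.
rewrite -c // -c // /shiftn addnS; exact: hy.
Qed.

Lemma cls_terminal u : OG G u u -> (forall v, OG G u v -> OG G v u) -> Gterminal G (cls u).
Proof.
move=> uu h; split; first exact: cls_basic.
move=> a b [_ [ua _]] ab; have ub := OG_trans ua ab.
by split; [exact: OG_trans (h _ ub) ub | split; [|exact: h]].
Qed.

Lemma ext (hDom : forall s, exists t, G s t) t : exists y N P, 0 < P /\ inKG G y /\ y 0 = t /\
  (forall i, reach0 t (y i)) /\ (forall i, y (N + P + i) = y (N + i)) /\
  Gterminal G (cls (y N)) /\ IsEnd G y (cls (y N)).
Proof.
have [u [[n tu] [uu hu]]] := term_reach hDom t.
have [w [P [hP [hw [w0 [wP wr]]]]]] := periodic uu.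
have wc : forall j, cls u (w j).
  move=> j; have [h1 h2] := wr j.
  apply: (basic_closed0 (cls_basic uu) (t := u) (u := u)) => //; by split.
have hx : forall i, i < 0 -> G ((fun _ : nat => t) i) ((fun _ : nat => t) i.+1) by [].
rewrite -w0 in tu.
have [z [hz [zx [zy zm]]]] := splice hx hw tu.
have ztail : forall i, n <= i -> z i = w (i - n).
  by move=> i hi; rewrite -zy; congr z; lia.
have zn : z n = u by rewrite ztail // subnn.
exists z, n, P; split => //; split => //; split; first by rewrite zx.
split.
  move=> i; case: (leqP i n) => hi.
    by have [] := zm i (leq0n i) hi.
  rewrite ztail; last lia.
  apply: reach0_trans (wr _).1; exists n; by rewrite -w0.
split.
  move=> i; rewrite !ztail; [|lia|lia].
  have -> : n + P + i - n = i + P by lia. have -> : n + i - n = i by lia. exact: wP.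
rewrite zn; split; first exact: cls_terminal.
split; first exact: cls_basic.
exists n => i hi; rewrite ztail //; split => //.
split; first exact: inKG_shiftn.
by move=> j; rewrite /shiftn ztail; [exact: wc | lia].
Qed.

Lemma OGx (x : nat -> K) a b : inKG G x -> a < b -> OG G (x a) (x b).
Proof.
move=> hx ab; exists (b - a).-1; have -> : (b - a).-1.+1 = b - a by lia.
apply: seg; [move=> i _ _; exact: hx | lia].
Qed.

Lemma reach0x (x : nat -> K) a b : inKG G x -> a <= b -> reach0 (x a) (x b).
Proof. move=> hx ab; exists (b - a); apply: seg; [move=> i _ _; exact: hx | lia]. Qed.

Definition Inf (x : nat -> K) (s : K) := forall M, exists j, M <= j /\ x j = s.

Lemma eventual (x : nat -> K) : exists N, forall i, N <= i -> Inf x (x i).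
Proof.
suff: forall l : seq K, exists N, forall i, N <= i -> x i \in l -> Inf x (x i).
  by case/(_ (enum K)) => N h; exists N => i hi; apply: h => //; rewrite mem_enum.
elim=> [|s l [N1 IH]]; first by exists 0.
case: (classic (Inf x s)) => hs.
  exists N1 => i hi; rewrite in_cons => /orP [/eqP -> // | hl]; exact: IH.
have [M hM] := not_all_ex_not _ _ hs.
exists (maxn N1 M) => i hi; rewrite in_cons => /orP [/eqP e | hl]; last by apply: IH => //; lia.
exfalso; apply: hM; exists i; split; [lia | exact: e].
Qed.

Lemma partA (x : nat -> K) : inKG G x -> exists B, IsEnd G x B /\ forall z, omega x z -> restrG G B z.
Proof.
move=> hx; have [N hN] := eventual x.
have hc : forall i, N <= i -> cls (x N) (x i).
  move=> i hi; split; last split.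
  - have [j [hj e]] := hN i hi i.+1; rewrite -{2}e; exact: OGx.
  - have [j [hj e]] := hN i hi N.+1; rewrite -e; exact: OGx.
  - have [j [hj e]] := hN N (leqnn N) i.+1; rewrite -e; exact: OGx.
have hb : Gbasic G (cls (x N)) by apply: cls_basic; exact: (hc N (leqnn N)).1.
exists (cls (x N)); split.
  split => //; exists N => i hi; split; first exact: hc.
  split; first exact: inKG_shiftn.
  move=> j; apply: hc; lia.
move=> z hz; split; first exact: omega_KG hz.
move=> j; have [n [hn c]] := hz j.+1 N.
rewrite -c //; apply: hc; rewrite /shiftn; lia.
Qed.

Lemma IsEnd_uniq (x : nat -> K) B B' : IsEnd G x B -> IsEnd G x B' -> forall s, B s <-> B' s.
Proof.
move=> [hb [k hk]] [hb' [k' hk']].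
have := (hk (maxn k k') (leq_maxl _ _)).1; have := (hk' (maxn k k') (leq_maxr _ _)).1.
move=> h1 h2; exact: basic_eq hb hb' h2 h1.
Qed.

Lemma point_in B t : Gbasic G B -> B t -> exists w P, 0 < P /\ restrG G B w /\ w 0 = t /\
  forall i, w (i + P) = w i.
Proof.
move=> hb bt; have [w [P [hP [hw [w0 [wP wr]]]]]] := periodic (basic_self hb bt).
exists w, P; split => //; split; last by split.
split; first exact: hw.
move=> j; have [h1 h2] := wr j; exact: (basic_closed0 hb bt bt h1 h2).
Qed.

Lemma CS_in B x y : Gbasic G B -> restrG G B x -> restrG G B y -> CS G x y.
Proof.
move=> hb [hx bx] [hy yy]; apply: CS_of_reach => // L; exact: basic_OG hb (bx L) (yy 0).
Qed.

Lemma CS_KG x y : CS G x y -> inKG G y.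
Proof. by case/(_ 0) => n [c [_ [_ [<- [hc _]]]]]; apply: hc. Qed.

Lemma CS_back B x y : Gbasic G B -> restrG G B x -> CS G x y -> CS G y x -> restrG G B y.
Proof.
move=> hb [hx bx] hxy hyx; split; first exact: CS_KG hxy.
move=> j; have o := chain_OG (ltn0Sn 0) (hxy 1) j.
case: (chain_back (ltn0Sn j) (hyx j.+1) (leqnSn j)) => [r | [m [_ ->]]] //.
exact: (basic_closed0 hb (bx 0) (bx 0) (OG_reach0 o) r).
Qed.

Lemma partB1 B : Gbasic G B -> Sbasic G (restrG G B) /\ topTransitive (restrG G B).
Proof.
move=> hb; have [s [ss hs]] := hb; have bs : B s by apply/hs.
have [x0 [P [hP [hx0 _]]]] := point_in hb bs.
split.
  exists x0; split; first exact: hx0.1; split; first exact: (CS_in hb hx0 hx0).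
  move=> y; split.
    move=> hy; split; first exact: hy.1.
    by split; [|split]; apply: CS_in hb _ _.
  by case=> hy [_ [h1 h2]]; exact: CS_back hb hx0 h1 h2.
move=> U V [UY Uo] [VY Vo] [u hu] [v hv].
have [k hk] := Uo u hu.
have [hU bu] := UY u hu; have [hV bv] := VY v hv.
have [n hn] := basic_OG hb (bu k) (bv 0).
have [z [hz [zx [zy zm]]]] := splice (fun i _ => hU i) hV hn.
have zv : shiftn (k + n.+1) z = v by apply: functional_extensionality => i; exact: zy.
exists (k + n.+1), z; split; first lia.
split; last by rewrite zv.
apply: hk; last by move=> i hi; rewrite zx //; lia.
split => // i; case: (leqP i k) => hi; first by rewrite zx.
case: (leqP i (k + n.+1)) => hi2.
  have [h1 h2] := zm i (ltnW hi) hi2; exact: basic_closed0 hb (bu k) (bv 0) h1 h2.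
have -> : i = k + n.+1 + (i - (k + n.+1)) by lia.
by rewrite zy.
Qed.

Lemma partB2 B B' : Gbasic G B -> Gbasic G B' ->
  (forall x, restrG G B x <-> restrG G B' x) -> forall s, B s <-> B' s.
Proof.
move=> hb hb' h s; split => hs.
  have [w [P [_ [hw [w0 _]]]]] := point_in hb hs; rewrite -w0; exact: ((h w).1 hw).2.
have [w [P [_ [hw [w0 _]]]]] := point_in hb' hs; rewrite -w0; exact: ((h w).2 hw).2.
Qed.

Lemma partB3 C : Sbasic G C -> exists B, Gbasic G B /\ forall x, C x <-> restrG G B x.
Proof.
case=> x [hx [xx hC]].
have o : OG G (x 0) (x 0) := chain_OG (ltn0Sn 0) (xx 1) 0.
have hb := cls_basic o.
have b0 : cls (x 0) (x 0) by [].
have hxB : restrG G (cls (x 0)) x.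
  split => // j; elim: j {-2}j (leqnn j) => [|j IH] i hi.
    by have -> : i = 0 by lia.
  have oi := chain_OG (ltn0Sn 0) (xx 1) i.
  case: (chain_back (ltn0Sn i) (xx i.+1) (leqnSn i)) => [r | [m [mi ->]]].
    exact: (basic_closed0 hb b0 b0 (OG_reach0 oi) r).
  apply: IH; lia.
exists (cls (x 0)); split => // y; rewrite hC; split.
  by case=> hy [_ [h1 h2]]; exact: CS_back hb hxB h1 h2.
move=> hy; split; first exact: hy.1.
by split; [|split]; apply: CS_in hb _ _.
Qed.

Definition fwd (A : K -> Prop) := forall s t, A s -> OG G s t -> A t.

Lemma fwd_restr A x : fwd A -> inKG G x -> A (x 0) -> restrG G A x.
Proof.
move=> hA hx a0; split => // j; case: j => [|j] //; apply: hA a0 _; exact: OGx.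
Qed.

Lemma fwd_tail A x k : fwd A -> inKG G x -> A (x k) -> forall i, k <= i -> A (x i).
Proof.
move=> hA hx a i hi; case: (ltngtP k i) => h.
- exact: hA a (OGx hx h).
- lia.
- by rewrite -h.
Qed.

Lemma partC1 (hDom : forall s, exists t, G s t) A :
  fwd A <-> (forall x, inKG G x -> (restrG G A x <-> A (x 0))).
Proof.
split.
  move=> hA x hx; split; first by case=> _; apply.
  exact: fwd_restr.
move=> h s t As [n hn].
have [y [N [P [_ [hy [y0 _]]]]]] := ext hDom t.
rewrite -y0 in hn.
have hx : forall i, i < 0 -> G ((fun _ : nat => s) i) ((fun _ : nat => s) i.+1) by [].
have [z [hz [zx [zy _]]]] := splice hx hy hn.
have := zy 0; rewrite y0 => <-.
have := (h z hz).2; rewrite zx // => /(_ As) [_]; apply.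
Qed.

Lemma partC2 A : fwd A ->
  (forall x y, restrG G A x -> CS G x y -> restrG G A y) /\
  clopenKG G (restrG G A) /\
  openKG G (fun x => inKG G x /\ exists B, IsEnd G x B /\ forall s, B s -> A s).
Proof.
move=> hA; split.
  move=> x y [hx ax] hxy; have hy := CS_KG hxy; apply: fwd_restr => //.
  exact: hA (ax 0) (chain_OG (ltn0Sn 0) (hxy 1) 0).
split; first split.
- move=> x hx [_ ax]; exists 1 => y hy c; apply: fwd_restr => //; rewrite -c //; exact: ax.
- move=> x hx nx; exists 1 => y hy c [_ ay]; apply: nx; apply: fwd_restr => //; rewrite c //; exact: ay.
move=> x hx [_ [B [[hb [k hk]] BA]]]; exists k.+1 => y hy c; split => //.
have yk : A (y k) by rewrite -c //; apply: BA; exact: (hk k (leqnn k)).1.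
have [B' [[hb' [k' hk']] _]] := partA hy.
exists B'; split; first by split => //; exists k'.
move=> b bb; have ym := (hk' (maxn k k') (leq_maxr _ _)).1.
apply: hA (fwd_tail hA hy yk (leq_maxl k k')) _; exact: basic_OG hb' ym bb.
Qed.

Lemma partD (hDom : forall s, exists t, G s t) s :
  exists x, inKG G x /\ x 0 = s /\ exists B, IsEnd G x B /\ Gterminal G B.
Proof.
have [y [N [P [_ [hy [y0 [_ [_ [ht he]]]]]]]]] := ext hDom s.
by exists y; split => //; split => //; exists (cls (y N)).
Qed.

Lemma EC (hDom : forall s, exists t, G s t) B x L b c : Gbasic G B -> inKG G x ->
  reach0 (x L) b -> B b -> OG G b c -> ~ B c ->
  exists z N P, inKG G z /\ close L.+1 x z /\ 0 < P /\
    (forall i, z (N + P + i) = z (N + i)) /\ forall i, N <= i -> ~ B (z i).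
Proof.
move=> hb hx xb bb bc nc.
have [n hn] := OG_trans0' xb bc.
have [y [N [P [hP [hy [y0 [yr [yP _]]]]]]]] := ext hDom c.
rewrite -y0 in hn.
have [z [hz [zx [zy _]]]] := splice (fun i _ => hx i) hy hn.
have ze : forall i, L + n.+1 <= i -> z i = y (i - (L + n.+1)).
  by move=> i hi; rewrite -zy; congr z; lia.
exists z, (L + n.+1 + N), P; split => //; split.
  by move=> i hi; rewrite zx //; lia.
split => //; split.
  move=> i; rewrite !ze; [|lia|lia].
  have -> : L + n.+1 + N + P + i - (L + n.+1) = N + P + i by lia.
  have -> : L + n.+1 + N + i - (L + n.+1) = N + i by lia.
  exact: yP.
move=> i hi; rewrite ze; last lia.
exact: (escape hb bb bc nc (yr _)).
Qed.

Lemma term_restr B x : Gterminal G B -> inKG G x -> B (x 0) -> restrG G B x.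
Proof. by case=> _ hB; apply: fwd_restr. Qed.

Lemma shiftn_succ (x : nat -> K) n : shiftn n.+1 x = shift (shiftn n x).
Proof. apply: functional_extensionality => i; rewrite /shiftn /shift; congr x; lia. Qed.

Lemma partE (hDom : forall s, exists t, G s t) B : Gbasic G B ->
     (Gterminal G B <-> Sterminal G (restrG G B)) /\
     (Gterminal G B <-> visible G (restrG G B)) /\
     (Gterminal G B <-> clopenKG G (restrG G B)) /\
     (Gterminal G B <-> attractor G (restrG G B)) /\
     (Gterminal G B <-> openKG G (fun x => inKG G x /\ IsEnd G x B)).
Proof.
move=> hb; have [s [ss hs]] := hb; have bs : B s by apply/hs.
have [x0 [P0 [hP0 [hx0 [x00 x0P]]]]] := point_in hb bs.
have SB := (partB1 hb).1.
split; last split; last split; last split.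
- split.
    move=> ht; split => //; move=> x y hx hxy; exact: ((partC2 ht.2).1 x y hx hxy).
  case=> _ hST; split => // b c bb bc.
  have [y [N [P [_ [hy [y0 _]]]]]] := ext hDom c.
  rewrite -y0; apply: ((hST x0 y hx0 _).2 0).
  apply: CS_of_reach => //; first exact: hx0.1.
  move=> L; rewrite y0; exact: OG_trans (basic_OG hb (hx0.2 L) bb) bc.
- split.
    move=> ht; split => //; exists x0; split; first exact: hx0.1.
    exists 1 => y hy c; split => //.
    have ry : restrG G B y by apply: term_restr => //; rewrite -c //; exact: hx0.2.
    move=> z hz; split; first exact: omega_KG hz.
    move=> j; have [n [_ cz]] := hz j.+1 0; rewrite -cz //; exact: ry.2.
  case=> _ [x [hx [k hk]]]; split => // b c bb bc; apply: NNPP => nc.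
  have [y [N [P [hP [hy [y0 [yr [yP _]]]]]]]] := ext hDom (x k).
  rewrite -y0 in hy yr.
  have [z [hz [zx [zy _]]]] := splice (fun i _ => hx i) hy (esym y0 : relpow G 0 (x k) (y 0)).
  have hz1 : forall j, z (k + 0 + N + P + j) = z (k + 0 + N + j).
    move=> j; have -> : k + 0 + N + P + j = k + 0 + (N + P + j) by lia.
    have -> : k + 0 + N + j = k + 0 + (N + j) by lia.
    by rewrite !zy yP.
  have [_ hw] := hk z hz (fun i hi => esym (zx i (ltnW hi))).
  have [_ bw] := hw _ (omega_periodic hz1 hP).
  have := bw 0; rewrite /shiftn; have -> : k + 0 + N + 0 = k + 0 + N by lia.
  rewrite zy => byN.
  have xb : reach0 (x k) b.
    rewrite -y0; apply: (reach0_trans (yr N)); apply: OG_reach0; exact: (basic_OG hb byN bb).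
  have [z' [N' [P' [hz' [c' [hP' [per nb]]]]]]] := EC hDom hb hx xb bb bc nc.
  have [_ hw'] := hk z' hz' (fun i hi => c' i (ltnW hi)).
  have [_ bw'] := hw' _ (omega_periodic per hP').
  apply: (nb N'); first exact: leqnn.
  by have := bw' 0; rewrite /shiftn addn0.
- split; first by move=> ht; exact: (partC2 ht.2).2.1.
  case=> ho _; split => // b c bb bc; apply: NNPP => nc.
  have [k hk] := ho x0 hx0.1 hx0.
  have xb : reach0 (x0 k) b := OG_reach0 (basic_OG hb (hx0.2 k) bb).
  have [z [N [P [hz [cz [hP [_ nb]]]]]]] := EC hDom hb hx0.1 xb bb bc nc.
  have [_ bz] := hk z hz (fun i hi => cz i (ltnW hi)).
  exact: (nb N (leqnn N) (bz N)).
- split.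
    move=> ht; have [_ hcl] := (partC2 ht.2).2.1.
    exists (restrG G B); split; first by move=> x [].
    split; first exact: hcl.
    split.
      move=> x [hx bx]; split; first exact: (inKG_shiftn 1 hx).
      exists 1 => y hy c; apply: term_restr => //; rewrite -c //; exact: bx 1.
    move=> y; split.
      move=> [hy bY] n.
      have [w [P [hP [hw [w0 wP]]]]] := point_in hb (bY 0).
      have hn : relpow G 0 (w (n * P)) (y 0).
        rewrite -w0; elim: n => [|n IH] //=. by rewrite mulSn addnC wP.
      have [z [hz [zx [zy zm]]]] := splice (fun i _ => hw.1 i) hy hn.
      exists (shiftn (n * P - n) z); split.
        apply: term_restr => //; first exact: inKG_shiftn.
        rewrite /shiftn addn0 zx; [exact: hw.2 | lia].
      apply: functional_extensionality => i; rewrite /shiftn.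
      have -> : n * P - n + (n + i) = n * P + 0 + i by nia.
      exact: zy.
    by move=> /(_ 0) [x [hx e]]; rewrite -e; have -> : shiftn 0 x = x by apply: functional_extensionality.
  case=> U [UK [_ [Uint hU]]]; split => // b c bb bc; apply: NNPP => nc.
  have BU : forall y, restrG G B y -> U y.
    move=> y hy; have [x [ux e]] := (hU y).1 hy 0.
    suff -> : y = x by []. rewrite -e; by apply: functional_extensionality.
  have Ush : forall v, U v -> U (shift v).
    move=> v /Uint [hv [k hk]]; exact: hk (shift v) hv (fun _ _ => erefl).
  have Ushn : forall n v, U v -> U (shiftn n v).
    elim=> [|n IH] v hv; first by have -> : shiftn 0 v = v by apply: functional_extensionality.
    rewrite shiftn_succ; exact: Ush (IH v hv).
  have x1B : restrG G B (shift x0).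
    split; first exact: (inKG_shiftn 1 hx0.1). move=> j; exact: hx0.2 j.+1.
  have [hx1 [k hk]] := Uint x0 (BU _ hx0).
  have xb : reach0 (shift x0 k) b := OG_reach0 (basic_OG hb (x1B.2 k) bb).
  have [z [N [P [hz [cz [hP [per nb]]]]]]] := EC hDom hb hx1 xb bb bc nc.
  have Uz : U z := hk z hz (fun i hi => cz i (ltnW hi)).
  have Cw : restrG G B (shiftn N z).
    apply/hU => n; exists (shiftn (N + n * P - n) z); split; first exact: Ushn.
    apply: functional_extensionality => i; rewrite /shiftn.
    have -> : N + n * P - n + (n + i) = N + n * P + i by nia.
    exact: periodic_shift per n i.
  apply: (nb N (leqnn N)); have := Cw.2 0; by rewrite /shiftn addn0.
- split.
    move=> [_ ht] x hx [_ [_ [k hk]]]; exists k.+1 => y hy c; split => //; split => //.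
    exists k => i hi.
    have bk : B (y k) by rewrite -c //; exact: (hk k (leqnn k)).1.
    have hyi : forall j, k <= j -> B (y j) by exact: fwd_tail ht hy bk.
    split; first exact: hyi.
    split; first exact: inKG_shiftn. move=> j; apply: hyi; rewrite /shiftn; lia.
  move=> ho; split => // b c bb bc; apply: NNPP => nc.
  have e0 : IsEnd G x0 B.
    split => //; exists 0 => i _; split; first exact: hx0.2.
    split; first exact: inKG_shiftn hx0.1. move=> j; exact: hx0.2.
  have [k hk] := ho x0 hx0.1 (conj hx0.1 e0).
  have xb : reach0 (x0 k) b := OG_reach0 (basic_OG hb (hx0.2 k) bb).
  have [z [N [P [hz [cz [hP [_ nb]]]]]]] := EC hDom hb hx0.1 xb bb bc nc.
  have [_ [_ [k' hk']]] := hk z hz (fun i hi => cz i (ltnW hi)).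
  exact: (nb (N + k') (leq_addr _ _) (hk' _ (leq_addl _ _)).1).
Qed.

Lemma IsEnd_shift (y z : nat -> K) L B : IsEnd G y B -> (forall j, z (L + j) = y j) -> IsEnd G z B.
Proof.
move=> [hb [k hk]] zy; split => //; exists (L + k) => i hi.
have e : shiftn i z = shiftn (i - L) y.
  apply: functional_extensionality => j; rewrite /shiftn -zy; congr z; lia.
have [h1 h2] := hk (i - L) ltac:(lia); split; last by rewrite e.
by have := zy (i - L); rewrite subnKC ?h; [move=> -> | lia].
Qed.

Lemma partF (hDom : forall s, exists t, G s t) :
  let D := fun x => inKG G x /\ exists B, IsEnd G x B /\ Gterminal G B in
  openKG G D /\ forall x, inKG G x -> forall k, exists y, inKG G y /\ close k x y /\ D y.
Proof.
move=> D; split.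
  move=> x hx [_ [B [he ht]]].
  have ho := ((partE hDom he.1).2.2.2.2).1 ht.
  have [k hk] := ho x hx (conj hx he).
  exists k => y hy c; have [_ hye] := hk y hy c; split => //; exists B; split => //.
move=> x hx k.
have [y [N [P [_ [hy [y0 [_ [_ [ht he]]]]]]]]] := ext hDom (x k).
have [z [hz [zx [zy _]]]] := splice (fun i _ => hx i) hy (esym y0 : relpow G 0 (x k) (y 0)).
exists z; split => //; split.
  by move=> i hi; rewrite zx //; lia.
split => //; exists (cls (y N)); split => //; exact: IsEnd_shift he zy.
Qed.

End S.

Theorem proposition3p1 (K : finType) (G : K -> K -> Prop)
  (hDom : forall s : K, exists t, G s t) :
  (* (a) *)
  (forall x, inKG G x ->
     (exists B, IsEnd G x B /\ forall z, omega x z -> restrG G B z) /\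
     (forall B B', IsEnd G x B -> IsEnd G x B' -> forall s, B s <-> B' s)) /\
  (* (b) *)
  ((forall B, Gbasic G B -> Sbasic G (restrG G B) /\ topTransitive (restrG G B)) /\
   (forall B B', Gbasic G B -> Gbasic G B' ->
      (forall x, restrG G B x <-> restrG G B' x) -> forall s, B s <-> B' s) /\
   (forall C, Sbasic G C -> exists B, Gbasic G B /\ forall x, C x <-> restrG G B x)) /\
  (* (c) *)
  (forall A : K -> Prop,
     ((forall s t, A s -> OG G s t -> A t) <->
      (forall x, inKG G x -> (restrG G A x <-> A (x 0)))) /\
     ((forall s t, A s -> OG G s t -> A t) ->
        (forall x y, restrG G A x -> CS G x y -> restrG G A y) /\
        clopenKG G (restrG G A) /\
        openKG G (fun x => inKG G x /\ exists B, IsEnd G x B /\ forall s, B s -> A s))) /\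
  (* (d) *)
  (forall s : K, exists x, inKG G x /\ x 0 = s /\ exists B, IsEnd G x B /\ Gterminal G B) /\
  (* (e) *)
  (forall B, Gbasic G B ->
     (Gterminal G B <-> Sterminal G (restrG G B)) /\
     (Gterminal G B <-> visible G (restrG G B)) /\
     (Gterminal G B <-> clopenKG G (restrG G B)) /\
     (Gterminal G B <-> attractor G (restrG G B)) /\
     (Gterminal G B <-> openKG G (fun x => inKG G x /\ IsEnd G x B))) /\
  (* (f) *)
  (let D := fun x => inKG G x /\ exists B, IsEnd G x B /\ Gterminal G B in
   openKG G D /\
   forall x, inKG G x -> forall k, exists y, inKG G y /\ close k x y /\ D y).
Proof.
Proof.
split.
  move=> x hx; split; first exact: partA.
  move=> B B'; exact: IsEnd_uniq.
split.
  split; first by move=> B; exact: partB1.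
  split; [exact: partB2 | exact: partB3].
split.
  move=> A; split; [exact: (partC1 hDom A) | exact: partC2].
split; first exact: partD hDom.
split; first by move=> B hB; exact: (partE hDom hB).
exact: (partF hDom).
Qed.
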